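(* Let $0\le r\le n$, let $A\in\mathcal{A}_{n+1,r+1}$ have block-ends $b_1>\dots>b_{r+1}$, and fix a tiling of $\Gamma(X(A))$. At the termination of the fusion-exchange algorithm applied to $A$, the union of the labels of the horizontal edges of the northwest boundary is $\{b_1+1,\dots,n+1\}$, the union of the labels of the vertical edges of the northwest boundary is $\{1,\dots,b_{r+1}-1\}$, and the union of the labels of the diagonal edges of the northwest boundary is $\{b_{r+1}+1,\dots,b_1\}$.
   Context: Words and diagrams. For $0\le r\le n$ let $B_n^r$ be the set of words $X\in\{H,L,0\}^n$ with exactly $r$ letters $L$. If $X$ has $k$ letters $H$, $r$ letters $L$ and $\ell$ letters $0$, its rhombic diagram $\Gamma(X)$ is the closed region bounded by two paths of unit steps, using the directions west (horizontal), south (vertical) and southwest (diagonal: a fixed unit vector strictly between west and south), both going from a point $P$ to a point $Q$: the northwest boundary consists of $\ell$ west steps, then $r$ southwest steps, then $k$ south steps; the southeast boundary is obtained by reading $X$ left to right and taking a west step for each $0$, a southwest step for each $L$, a south step for each $H$. A tiling of $\Gamma(X)$ is a tiling by unit rhombi of three kinds: squares (horizontal and vertical edges), tall rhombi (vertical and diagonal edges), short rhombi (horizontal and diagonal edges). Each tile has two edges on its lower-right side: its east edge (vertical for squares and tall rhombi, diagonal for short rhombi) and its south edge (horizontal for squares and short rhombi, diagonal for tall rhombi); the parallel edges on its upper-left side are its west and north edges. Assemblées. An assemblée of size $(m,s)$ is a collection of $s$ nonempty, pairwise disjoint, linearly ordered sets (blocks) with union $\{1,\dots,m\}$; the last element of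 a block is its block-end. Blocks are listed in the canonical order with decreasing block-ends, and the assemblée is identified with the concatenated word. $\mathcal{A}_{m,s}$ is the set of these. For $A\in\mathcal{A}_{n+1,r+1}$ with block-ends $b_1>\dots>b_{r+1}$, a non-block-end element $x$ is an increase if $x+1$ appears to the right of $x$ in $A$, and a decrease otherwise (so $n+1$, if not a block-end, is a decrease). $X(A)\in B_n^r$ is obtained from $A$ by deleting its last letter $b_{r+1}$ and replacing each increase by $H$, each decrease by $0$ and each remaining block-end by $L$. Fusion-exchange algorithm. A label is a finite, possibly empty, set of consecutive integers; for labels $E,S$ write $E\succ S$ if both are nonempty and $\min E=\max S+1$. Given $A\in\mathcal{A}_{n+1,r+1}$ and a tiling of $\Gamma(X(A))$: initially the southeast boundary edges, in order from $P$ to $Q$, receive the singleton labels of the letters of $A$ from left to right, $b_{r+1}$ omitted. Step: choose a tile whose east and south edges are labeled, say by $E$ and $S$, and whose west and north edges are not. (R I) If $E\succ S$ and the south edge is horizontal: west edge gets $E\cup S$, north edge gets $\emptyset$, place $\alpha$ in the tile. (R II) If $S\succ E$ and the east edge is vertical: north edge gets $E\cup S$, west edge gets $\emptyset$, place $\beta$. (R III) Otherwise: west edge gets $E$, north edge gets $S$, and place $q$ if $E\ne\emptyset$ and $S\ne\emptyset$. Repeat until every edge is labeled (termination). *)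

(* Defs.v *)
From HB Require Import structures.
From mathcomp Require Import all_boot.
Set Implicit Arguments. Unset Strict Implicit. Unset Printing Implicit Defensive.

(* An assemblée of size (m,s): a list of s nonempty blocks (linearly ordered
   sets, i.e. duplicate-free sequences), pairwise disjoint, with union
   {1,...,m}, listed in canonical order: decreasing block-ends (last elements). *)
Definition block_end (b : seq nat) : nat := last 0 b.

Definition assemblee (m s : nat) (B : seq (seq nat)) : Prop :=
  [/\ size B = s,
      all (fun b => size b > 0) B,
      perm_eq (flatten B) (iota 1 m)
    & sorted (fun x y => y < x) (map block_end B)].

(* the assemblée identified with its concatenated word *)
Definition asm_word (B : seq (seq nat)) : seq nat := flatten B.
Definition asm_ends (B : seq (seq nat)) : seq nat := map block_end B.
Definition b_first (B : seq (seq nat)) : nat := head 0 (asm_ends B).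
Definition b_last (B : seq (seq nat)) : nat := last 0 (asm_ends B).

Definition is_increase (B : seq (seq nat)) (x : nat) : bool :=
  (x \notin asm_ends B) &&
  (x.+1 \in drop (index x (asm_word B)).+1 (asm_word B)).

Inductive letter := LetH | LetL | Let0.

Definition letter_of (B : seq (seq nat)) (x : nat) : letter :=
  if x \in asm_ends B then LetL
  else if is_increase B x then LetH else Let0.

(* the letters of A with the last letter b_{r+1} deleted *)
Definition asm_word_trunc (B : seq (seq nat)) : seq nat :=
  take (size (asm_word B)).-1 (asm_word B).

Definition X_of (B : seq (seq nat)) : seq letter :=
  map (letter_of B) (asm_word_trunc B).

Inductive dir := DirW (* horizontal *) | DirSW (* diagonal *) | DirS (* vertical *).

Definition dir_rank (d : dir) : nat :=
  match d with DirW => 0 | DirSW => 1 | DirS => 2 end.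

Definition dir_eqb (d1 d2 : dir) : bool := dir_rank d1 == dir_rank d2.
Lemma dir_eqP : Equality.axiom dir_eqb.
Proof. by case; case; constructor. Qed.
HB.instance Definition _ := hasDecEq.Build dir dir_eqP.

(* southeast-boundary step for each letter: 0 -> west, L -> southwest, H -> south *)
Definition dir_of_letter (c : letter) : dir :=
  match c with Let0 => DirW | LetL => DirSW | LetH => DirS end.

(* A label is a finite, possibly empty, set of consecutive integers:
   None = empty, Some (a, b) = {a, a+1, ..., b} (with a <= b). *)
Definition label := option (nat * nat).

Definition lab_mem (x : nat) (E : label) : bool :=
  if E is Some (a, b) then (a <= x) && (x <= b) else false.

Definition lab_succ (E S : label) : bool :=
  match E, S with
  | Some (a, _), Some (_, d) => a == d.+1
  | _, _ => false
  end.

(* union of two labels, used when one immediately follows the other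
   (then it is again a set of consecutive integers) *)
Definition lab_union (E S : label) : label :=
  match E, S with
  | Some (a, b), Some (c, d) => Some (minn a c, maxn b d)
  | Some _, None => E
  | None, _ => S
  end.

(* A state is the current frontier of labeled edges: the path of labeled edges
   from P to Q, each edge given by its direction and its label.  Processing a
   tile whose east edge (direction dE, label E) is followed along the path by
   its south edge (direction dS, label S) replaces these two edges by the
   north edge (direction dS) followed by the west edge (direction dE).
   fe_rule returns (west label, north label). *)
Definition fe_rule (dE : dir) (E : label) (dS : dir) (S : label) : label * label :=
  if lab_succ E S && (dS == DirW) then (lab_union E S, None)
  else if lab_succ S E && (dE == DirS) then (None, lab_union E S)
  else (E, S).

Definition fe_state := seq (dir * label).

(* The three tile kinds correspond exactly to the adjacent pairs
   (S,W) square, (S,SW) tall rhombus, (SW,W) short rhombus, i.e. to the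
   pairs with dir_rank dS < dir_rank dE. *)
Inductive fe_step : fe_state -> fe_state -> Prop :=
  | FeStep (p1 p2 : fe_state) (dE dS : dir) (E S : label) :
      dir_rank dS < dir_rank dE ->
      fe_step (p1 ++ (dE, E) :: (dS, S) :: p2)
              (p1 ++ (dS, (fe_rule dE E dS S).2) :: (dE, (fe_rule dE E dS S).1) :: p2).

Inductive fe_run : fe_state -> fe_state -> Prop :=
  | FeRefl p : fe_run p p
  | FeTrans p q s : fe_step p q -> fe_run q s -> fe_run p s.

Definition fe_terminal (p : fe_state) : Prop := forall q, ~ fe_step p q.

(* initial labeling of the southeast boundary of Gamma(X(A)) *)
Definition fe_init (B : seq (seq nat)) : fe_state :=
  map (fun x => (dir_of_letter (letter_of B x), Some (x, x))) (asm_word_trunc B).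

Definition in_labels (d : dir) (p : fe_state) (x : nat) : bool :=
  has (fun e => (e.1 == d) && lab_mem x e.2) p.

(* Main.v *)
Require Import Defs.
From HB Require Import structures.
From mathcomp Require Import all_boot.
From mathcomp Require Import zify.
Set Implicit Arguments. Unset Strict Implicit. Unset Printing Implicit Defensive.

Definition d0 : dir * label := (DirW, None).
Definition at_ (p : fe_state) i x := (i < size p) && lab_mem x (nth d0 p i).2.
Definition dr (p : fe_state) i := (nth d0 p i).1.
Definition wfl (l : label) := if l is Some (a, b) then a <= b else true.

Record Inv (N bl b1 : nat) (p : fe_state) : Prop := {
 iV : forall i, wfl (nth d0 p i).2;
 iP : forall x, (exists i, at_ p i x) <-> (0 < x <= N /\ x != bl);
 iU : forall x i j, at_ p i x -> at_ p j x -> i = j;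
 iW : forall x i, at_ p i x -> dr p i = DirW -> x < N -> exists2 j, j <= i & at_ p j x.+1;
 iS : forall x i, at_ p i x -> dr p i = DirS ->
        x < N /\ (x.+1 = bl \/ exists2 j, i <= j & at_ p j x.+1);
 iSW : forall x i, at_ p i x -> dr p i = DirSW -> bl < x <= b1;
 iE : b1 != bl -> exists2 i, at_ p i b1 & dr p i = DirSW }.

Variant rule_spec dE E dS S : label -> label -> Prop :=
 | R1 of lab_succ E S & dS = DirW : rule_spec dE E dS S (lab_union E S) None
 | R2 of lab_succ S E & dE = DirS : rule_spec dE E dS S None (lab_union E S)
 | R3 of ~~ (lab_succ E S && (dS == DirW)) & ~~ (lab_succ S E && (dE == DirS)) :
     rule_spec dE E dS S E S.

Lemma rule_cases dE E dS S :
  rule_spec dE E dS S (fe_rule dE E dS S).1 (fe_rule dE E dS S).2.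
Proof.
rewrite /fe_rule; case: ifP => [/andP[h /eqP ->]|h1]; first by constructor.
case: ifP => [/andP[h /eqP ->]|h2]; first by constructor.
by constructor; rewrite ?h1 ?h2.
Qed.

Lemma union_mem E S x : wfl E -> wfl S -> lab_succ E S || lab_succ S E ->
  lab_mem x (lab_union E S) = lab_mem x E || lab_mem x S.
Proof.
case: E => [[a b]|] ; case: S => [[c d]|] //= h1 h2 /orP[] /eqP ->;
  apply/idP/idP; lia.
Qed.

Lemma union_wf E S : wfl E -> wfl S -> lab_succ E S || lab_succ S E ->
  wfl (lab_union E S).
Proof. case: E => [[a b]|] ; case: S => [[c d]|] //= h1 h2 /orP[] /eqP ->; lia. Qed.

Lemma disj_succ E S x : lab_mem x E -> lab_mem x.+1 S ->
  (forall y, lab_mem y E -> lab_mem y S -> False) -> lab_succ S E.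
Proof.
case: E => [[a b]|] ; case: S => [[c d]|] //= h1 h2 hd.
apply/eqP; case: (ltnP b c) => hbc; first lia.
exfalso; apply: (hd (maxn a c)); lia.
Qed.

Lemma succ_next E S x : lab_succ S E -> wfl S -> lab_mem x E ->
  lab_mem x.+1 E || lab_mem x.+1 S.
Proof. case: E => [[a b]|] ; case: S => [[c d]|] //= /eqP -> h1 h2. lia. Qed.

Lemma sw_aux E S x bl b1 : lab_succ S E -> wfl S -> lab_mem x E ->
  (forall y, lab_mem y S -> bl < y <= b1) -> ~~ lab_mem bl E -> bl < x <= b1.
Proof.
case: E => [[a b]|] ; case: S => [[c d]|] //= /eqP -> h1 h2 h3 h4.
have := h3 b.+1; rewrite leqnn h1 => /(_ isT). lia.
Qed.



Ltac sd h hr hrule drPk drPk1 drQk drQk1 := let e := fresh in move: (h) => e;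
  (try rewrite e in hr); (try rewrite e in hrule); (try rewrite e in drPk);
  (try rewrite e in drPk1); (try rewrite e in drQk); (try rewrite e in drQk1).

Lemma core N bl b1 (P Q : fe_state) k dE E dS S E' S' :
  dir_rank dS < dir_rank dE ->
  rule_spec dE E dS S E' S' ->
  size Q = size P -> k.+1 < size P ->
  (forall i, i != k -> i != k.+1 -> nth d0 Q i = nth d0 P i) ->
  nth d0 P k = (dE,E) -> nth d0 P k.+1 = (dS,S) ->
  nth d0 Q k = (dS,S') -> nth d0 Q k.+1 = (dE,E') ->
  Inv N bl b1 P -> Inv N bl b1 Q.
Proof.
move=> hr hrule sz lt hout hPk hPk1 hQk hQk1 [V Pr U IW IS ISW IE].
have ltk : k < size P by apply: ltnW.
have atQo i x : i != k -> i != k.+1 -> at_ Q i x = at_ P i x.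
  by move=> h1 h2; rewrite /at_ sz hout.
have drQo i : i != k -> i != k.+1 -> dr Q i = dr P i.
  by move=> h1 h2; rewrite /dr hout.
have atPk x : at_ P k x = lab_mem x E by rewrite /at_ ltk hPk.
have atPk1 x : at_ P k.+1 x = lab_mem x S by rewrite /at_ lt hPk1.
have atQk x : at_ Q k x = lab_mem x S' by rewrite /at_ sz ltk hQk.
have atQk1 x : at_ Q k.+1 x = lab_mem x E' by rewrite /at_ sz lt hQk1.
have drPk : dr P k = dE by rewrite /dr hPk.
have drPk1 : dr P k.+1 = dS by rewrite /dr hPk1.
have drQk : dr Q k = dS by rewrite /dr hQk.
have drQk1 : dr Q k.+1 = dE by rewrite /dr hQk1.
have wfE : wfl E by have := V k; rewrite hPk.
have wfS : wfl S by have := V k.+1; rewrite hPk1.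
have disj y : lab_mem y E -> lab_mem y S -> False.
  by rewrite -atPk -atPk1 => h1 h2; have := U _ _ _ h1 h2; lia.
have memU x : lab_mem x S' || lab_mem x E' = lab_mem x E || lab_mem x S.
  case: hrule => [h _|h _|_ _]; rewrite ?union_mem ?h ?orbT //=; exact: orbC.
have wfS' : wfl S'.
  case: hrule => [h _|h _|_ _] //; apply: union_wf => //; by rewrite h ?orbT.
have wfE' : wfl E'.
  case: hrule => [h _|h _|_ _] //; apply: union_wf => //; by rewrite h ?orbT.
have relPQ j y : (j == k) || (j == k.+1) -> at_ P j y ->
    exists2 j', (j' == k) || (j' == k.+1) & at_ Q j' y.
  move=> /orP[]/eqP-> h.
  - have : lab_mem y S' || lab_mem y E' by rewrite memU -atPk h.
    by case/orP=> h'; [exists k; rewrite ?eqxx ?atQk | exists k.+1; rewrite ?eqxx ?orbT ?atQk1].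
  - have : lab_mem y S' || lab_mem y E' by rewrite memU -atPk1 h orbT.
    by case/orP=> h'; [exists k; rewrite ?eqxx ?atQk | exists k.+1; rewrite ?eqxx ?orbT ?atQk1].
have relQP j y : (j == k) || (j == k.+1) -> at_ Q j y ->
    exists2 j', (j' == k) || (j' == k.+1) & at_ P j' y.
  move=> /orP[]/eqP-> h.
  - have : lab_mem y E || lab_mem y S by rewrite -memU -atQk h.
    by case/orP=> h'; [exists k; rewrite ?eqxx ?atPk | exists k.+1; rewrite ?eqxx ?orbT ?atPk1].
  - have : lab_mem y E || lab_mem y S by rewrite -memU -atQk1 h orbT.
    by case/orP=> h'; [exists k; rewrite ?eqxx ?atPk | exists k.+1; rewrite ?eqxx ?orbT ?atPk1].
split.
-
  move=> i; have [->|n1] := eqVneq i k; first by rewrite hQk.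
  have [->|n2] := eqVneq i k.+1; first by rewrite hQk1.
  by rewrite hout.
-
  move=> x; rewrite -Pr; split=> -[i hi].
  + have [n1|] := boolP ((i == k) || (i == k.+1)).
      by case: (relQP _ _ n1 hi) => j _ h; exists j.
    rewrite negb_or => /andP[n1 n2]; exists i; by rewrite -atQo.
  + have [n1|] := boolP ((i == k) || (i == k.+1)).
      by case: (relPQ _ _ n1 hi) => j _ h; exists j.
    rewrite negb_or => /andP[n1 n2]; exists i; by rewrite atQo.
-
  move=> x i j hi hj.
  have [ni|] := boolP ((i == k) || (i == k.+1));
  have [nj|] := boolP ((j == k) || (j == k.+1)).
  + case/orP: ni => /eqP ei; case/orP: nj => /eqP ej; subst i j => //; exfalso.
    * move: hi hj; rewrite atQk atQk1; case: hrule => [_ _|_ _|_ _] //=.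
      by rewrite -atPk -atPk1 => h1 h2; have := U _ _ _ h1 h2; lia.
    * move: hi hj; rewrite atQk atQk1; case: hrule => [_ _|_ _|_ _] //=.
      by rewrite -atPk -atPk1 => h1 h2; have := U _ _ _ h1 h2; lia.
  + rewrite negb_or => /andP[n1 n2]; rewrite atQo // in hj.
    case: (relQP _ _ ni hi) => i' hi' h; have := U _ _ _ h hj; lia.
  + move=> /[dup] nn; rewrite negb_or => /andP[n1 n2]; rewrite atQo // in hi.
    case: (relQP _ _ nj hj) => j' hj' h; have := U _ _ _ h hi; lia.
  + rewrite !negb_or => /andP[n3 n4] /andP[n1 n2].
    rewrite atQo // in hi; rewrite atQo // in hj; exact: U hi hj.
-
  move=> x i hi hd hx.
  have [ei|n1] := eqVneq i k; [|have [ei|n2] := eqVneq i k.+1].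
  + subst i; rewrite drQk in hd; sd hd hr hrule drPk drPk1 drQk drQk1; move: hi.
    case: hrule atQk atQk1 => [h _|h _|h1 h2] atQk atQk1; rewrite atQk //.
    * rewrite union_mem ?h ?orbT // => /orP[hxE|hxS].
      - exists k => //; rewrite atQk union_mem ?h ?orbT //.
        exact: succ_next.
      - have := IW x k.+1; rewrite atPk1 hxS drPk1 => /(_ isT erefl hx) [j hj hj'].
        have [jk|jk] := ltnP j k; first by exists j; [lia|rewrite atQo //; lia].
        have hj2 : (j == k) || (j == k.+1) by apply/orP; lia.
        case: (relPQ _ _ hj2 hj') => j' hj'2 hq.
        exists k => //; rewrite atQk union_mem ?h ?orbT //.
        move: hj'; case/orP: hj2 => /eqP ->; rewrite ?atPk ?atPk1 => ->; by rewrite ?orbT.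
    * move=> hxS; have := IW x k.+1; rewrite atPk1 hxS drPk1 => /(_ isT erefl hx) [j hj hj'].
      have [jk|jk] := ltnP j k; first by exists j; [lia|rewrite atQo //; lia].
      have [ejk|njk] := eqVneq j k.
        subst j; rewrite atPk in hj'.
        have := disj_succ hxS hj' (fun y a b => disj y b a).
        by move: h1; rewrite eqxx andbT => /negbTE ->.
      have ej : j = k.+1 by lia.
      by subst j; exists k => //; rewrite atQk -atPk1.
  + subst i; rewrite drQk1 in hd; sd hd hr hrule drPk drPk1 drQk drQk1; by [].
  + rewrite atQo // in hi; rewrite drQo // in hd.
    case: (IW x i hi hd hx) => j hj hj'.
    have [hj2|] := boolP ((j == k) || (j == k.+1)).
      case: (relPQ _ _ hj2 hj') => j' hj'2 hq; exists j' => //.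
      move: hj2 hj'2 => /orP[]/eqP ? /orP[]/eqP ?; subst; lia.
    rewrite negb_or => /andP[m1 m2]; exists j => //; by rewrite atQo.
-
  move=> x i hi hd.
  have [ei|n1] := eqVneq i k; [|have [ei|n2] := eqVneq i k.+1].
  + subst i; rewrite drQk in hd; sd hd hr hrule drPk drPk1 drQk drQk1; by move: hr; case: (dE).
  + subst i; rewrite drQk1 in hd; sd hd hr hrule drPk drPk1 drQk drQk1; move: hi.
    case: hrule atQk atQk1 => [h _|h _|h1 h2] atQk atQk1; rewrite atQk1 //.
    * rewrite union_mem ?h ?orbT // => /orP[hxE|hxS].
      - have := IS x k; rewrite atPk hxE drPk => /(_ isT erefl) [hx hor]; split => //.
        case: hor => [->|[j hj hj']]; [by left|right].
        have [hj2|] := boolP ((j == k) || (j == k.+1)).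
          exists k.+1 => //; rewrite atQk1 union_mem ?h ?orbT //.
          move: hj'; case/orP: hj2 => /eqP ->; rewrite ?atPk ?atPk1 => ->; by rewrite ?orbT.
        rewrite negb_or => /andP[m1 m2]; exists j; [lia|by rewrite atQo].
      - have hn := succ_next h wfE hxS.
        have hx : x < N.
          have : exists i, at_ P i x.+1.
            by case/orP: hn => hh; [exists k.+1; rewrite atPk1|exists k; rewrite atPk].
          by move/Pr => [/andP[_ ->]].
        split => //; right; exists k.+1 => //; rewrite atQk1 union_mem ?h ?orbT //.
        by rewrite orbC.
    * move=> hxE; have := IS x k; rewrite atPk hxE drPk => /(_ isT erefl) [hx hor]; split => //.
        case: hor => [->|[j hj hj']]; [by left|right].
      have [ejk|njk] := eqVneq j k; first by subst j; exists k.+1 => //; rewrite atQk1 -atPk.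
      have [ejk1|njk1] := eqVneq j k.+1.
        subst j; rewrite atPk1 in hj'.
        have := disj_succ hxE hj' disj.
        by move: h2; rewrite eqxx andbT => /negbTE ->.
      exists j; [lia|by rewrite atQo].
  + rewrite atQo // in hi; rewrite drQo // in hd.
    case: (IS x i hi hd) => hx hor; split => //.
    case: hor => [->|[j hj hj']]; [by left|right].
    have [hj2|] := boolP ((j == k) || (j == k.+1)).
      case: (relPQ _ _ hj2 hj') => j' hj'2 hq; exists j' => //.
      move: hj2 hj'2 => /orP[]/eqP ? /orP[]/eqP ?; subst; lia.
    rewrite negb_or => /andP[m1 m2]; exists j => //; by rewrite atQo.
-
  have nobl j : at_ P j bl -> False.
    by move=> h; have /Pr[_ /eqP] : exists j, at_ P j bl by exists j.
  move=> x i hi hd.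
  have [ei|n1] := eqVneq i k; [|have [ei|n2] := eqVneq i k.+1].
  + subst i; rewrite drQk in hd; sd hd hr hrule drPk drPk1 drQk drQk1; move: hi.
    case: hrule atQk atQk1 => [h _|h _|h1 h2] atQk atQk1; rewrite atQk //.
    * rewrite union_mem ?h ?orbT // => /orP[hxE|hxS]; last first.
        by apply: (ISW x k.+1); rewrite ?atPk1.
      apply: (sw_aux h wfS hxE) => [y hy|].
        by apply: (ISW y k.+1); rewrite ?atPk1.
      by apply/negP => hb; apply: (nobl k); rewrite atPk.
    * by move=> hxS; apply: (ISW x k.+1); rewrite ?atPk1.
  + subst i; rewrite drQk1 in hd; sd hd hr hrule drPk drPk1 drQk drQk1; move: hi.
    case: hrule atQk atQk1 => [h _|h _|h1 h2] atQk atQk1; rewrite atQk1 //.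
    * rewrite union_mem ?h ?orbT // => /orP[hxE|hxS].
        by apply: (ISW x k); rewrite ?atPk.
      apply: (sw_aux h wfE hxS) => [y hy|].
        by apply: (ISW y k); rewrite ?atPk.
      by apply/negP => hb; apply: (nobl k.+1); rewrite atPk1.
    * by move=> hxE; apply: (ISW x k); rewrite ?atPk.
  + rewrite atQo // in hi; rewrite drQo // in hd; exact: ISW hi hd.
-
  move=> hb; case: (IE hb) => i hi hd.
  have [ei|n1] := eqVneq i k; [|have [ei|n2] := eqVneq i k.+1].
  + subst i; rewrite drPk in hd; sd hd hr hrule drPk drPk1 drQk drQk1; rewrite atPk in hi.
    case: hrule atQk atQk1 => [h _|h _|h1 h2] atQk atQk1 //.
    * exists k.+1; last by rewrite drQk1.
      by rewrite atQk1 union_mem ?h ?hi ?orbT.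
    * by exists k.+1; rewrite ?drQk1 ?atQk1.
  + subst i; rewrite drPk1 in hd; sd hd hr hrule drPk drPk1 drQk drQk1; rewrite atPk1 in hi.
    case: hrule atQk atQk1 => [h _|h _|h1 h2] atQk atQk1 //.
    * exists k; last by rewrite drQk.
      by rewrite atQk union_mem ?h ?hi ?orbT.
    * by exists k; rewrite ?drQk ?atQk.
  + by exists i; rewrite ?atQo ?drQo.
Qed.



Lemma nth_swap2 (p1 p2 : fe_state) a b a' b' i :
  i != size p1 -> i != (size p1).+1 ->
  nth d0 (p1 ++ a' :: b' :: p2) i = nth d0 (p1 ++ a :: b :: p2) i.
Proof.
move=> h1 h2; rewrite !nth_cat; case: ifP => // /negbT; rewrite -leqNgt => le.
have : 2 <= i - size p1 by lia.
by case: (i - size p1) => [|[|m]].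
Qed.

Lemma nth_k (p1 p2 : fe_state) a b : nth d0 (p1 ++ a :: b :: p2) (size p1) = a.
Proof. by rewrite nth_cat ltnn subnn. Qed.

Lemma nth_k1 (p1 p2 : fe_state) a b : nth d0 (p1 ++ a :: b :: p2) (size p1).+1 = b.
Proof. by rewrite nth_cat ltnNge leqnSn /= subSnn. Qed.

Lemma step_inv N bl b1 p q : fe_step p q -> Inv N bl b1 p -> Inv N bl b1 q.
Proof.
case=> p1 p2 dE dS E S hr.
apply: (core (k := size p1) hr (rule_cases dE E dS S)).
- by rewrite !size_cat.
- rewrite size_cat /=; lia.
- by move=> i; apply: nth_swap2.
- exact: nth_k.
- exact: nth_k1.
- exact: nth_k.
- exact: nth_k1.
Qed.

Lemma run_inv N bl b1 p q : fe_run p q -> Inv N bl b1 p -> Inv N bl b1 q.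
Proof. by elim=> // p0 q0 s0 hs _ IH /(step_inv hs). Qed.

Lemma split_at (p : fe_state) i : i.+1 < size p ->
  p = take i p ++ nth d0 p i :: nth d0 p i.+1 :: drop i.+2 p.
Proof.
move=> h; rewrite -{1}(cat_take_drop i p) (drop_nth d0) ?(drop_nth d0 (n := i.+1)) //.
exact: ltnW.
Qed.

Lemma term_mono p : fe_terminal p ->
  forall i j, i <= j -> j < size p -> dir_rank (dr p i) <= dir_rank (dr p j).
Proof.
move=> ht.
have adj i : i.+1 < size p -> dir_rank (dr p i) <= dir_rank (dr p i.+1).
  move=> h; rewrite leqNgt; apply/negP => hlt.
  move: (split_at h) hlt; rewrite /dr.
  case: (nth d0 p i) => dE E; case: (nth d0 p i.+1) => dS S /= hp hlt.
  apply: (ht (take i p ++ (dS, (fe_rule dE E dS S).2) :: (dE, (fe_rule dE E dS S).1)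
     :: drop i.+2 p)).
  rewrite {1}hp; exact: FeStep.
move=> i j hij hj; elim: j hij hj => [|j IH] hij hj.
  by rewrite leqn0 in hij; move/eqP: hij => ->.
case: (ltngtP i j.+1) hij => // [hlt|->] _ //.
apply: leq_trans (IH hlt (ltnW hj)) (adj _ hj).
Qed.

Lemma in_labelsP d p x : reflect (exists2 i, at_ p i x & dr p i = d) (in_labels d p x).
Proof.
apply: (iffP (has_nthP d0)) => -[i hi h].
  move/andP: h => [/eqP hd hm]; exists i => //; by rewrite /at_ hi.
move/andP: hi => [hi hm]; exists i => //; rewrite /dr in h; by rewrite hm h eqxx.
Qed.

Lemma final N bl b1 p : Inv N bl b1 p -> fe_terminal p -> bl <= b1 -> b1 <= N ->
  [/\ forall x, in_labels DirW p x = (b1 < x <= N),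
      forall x, in_labels DirS p x = (1 <= x < bl)
    & forall x, in_labels DirSW p x = (bl < x <= b1)].
Proof.
move=> [V Pr U IW IS ISW IE] ht hb hbN.
have mono := term_mono ht.
have sz i x : at_ p i x -> i < size p by case/andP.
have Wc x i : at_ p i x -> dr p i = DirW -> x < N -> exists2 j, at_ p j x.+1 & dr p j = DirW.
  move=> h1 h2 h3; case: (IW x i h1 h2 h3) => j hj hj'; exists j => //.
  have := mono _ _ hj (sz _ _ h1); rewrite h2; by case: (dr p j).
have Sc x i : at_ p i x -> dr p i = DirS ->
    x < N /\ (x.+1 = bl \/ exists2 j, at_ p j x.+1 & dr p j = DirS).
  move=> h1 h2; case: (IS x i h1 h2) => h3 hor; split => //.
  case: hor => [->|[j hj hj']]; [by left|right].
  exists j => //; have := mono _ _ hj (sz _ _ hj'); rewrite h2; by case: (dr p j).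
have Wx x i : at_ p i x -> dr p i = DirW -> b1 < x.
  move=> h1 h2; rewrite ltnNge; apply/negP => hx.
  move: {2}(b1 - x) (leqnn (b1 - x)) => m; elim: m x i h1 h2 hx => [|m IH] x i h1 h2 hx hm.
    have ex : x = b1 by lia.
    subst x; have /Pr[_ hne] : exists i, at_ p i b1 by exists i.
    case: (IE hne) => i' hi' hd'; have ei := U _ _ _ h1 hi'; subst i'.
    by rewrite h2 in hd'.
  have /Pr[/andP[_ hxN] hne] : exists i, at_ p i x by exists i.
  have hxb : x < b1.
    rewrite ltn_neqAle hx andbT; apply/eqP => ex; subst x.
    case: (IE hne) => i' hi' hd'; have ei := U _ _ _ h1 hi'; subst i'.
    by rewrite h2 in hd'.
  case: (Wc x i h1 h2); first by lia.
  move=> j hj hj'; apply: (IH _ _ hj hj'); lia.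
have Sx x i : at_ p i x -> dr p i = DirS -> x < bl.
  move=> h1 h2; have /Pr[_ hne] : exists i, at_ p i x by exists i.
  rewrite ltn_neqAle hne /= leqNgt; apply/negP => hx.
  move: {2}(N - x) (leqnn (N - x)) => m; elim: m x i h1 h2 hx {hne} => [|m IH] x i h1 h2 hx hm.
    case: (Sc x i h1 h2) => hxN _; lia.
  case: (Sc x i h1 h2) => hxN [ex|[j hj hj']]; first lia.
  apply: (IH _ _ hj hj'); lia.
have pres x : 0 < x <= N -> x != bl -> exists i, at_ p i x.
  by move=> h1 h2; apply/Pr.
have dcase (d : dir) : [\/ d = DirW, d = DirSW | d = DirS] by case: d; constructor.
split=> x; apply/idP/idP.
- case/in_labelsP => i h1 h2.
  have /Pr[/andP[_ ->] _] : exists i, at_ p i x by exists i.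
  by rewrite (Wx _ _ h1 h2).
- move=> hx; have [i hi] := pres x ltac:(lia) ltac:(apply/eqP; lia).
  apply/in_labelsP; exists i => //.
  case: (dcase (dr p i)) => // hd.
    have := ISW _ _ hi hd; lia.
  have := Sx _ _ hi hd; lia.
- case/in_labelsP => i h1 h2.
  have /Pr[/andP[-> _] _] : exists i, at_ p i x by exists i.
  by rewrite (Sx _ _ h1 h2).
- move=> hx; have [i hi] := pres x ltac:(lia) ltac:(apply/eqP; lia).
  apply/in_labelsP; exists i => //.
  case: (dcase (dr p i)) => // hd.
    have := Wx _ _ hi hd; lia.
  have := ISW _ _ hi hd; lia.
- case/in_labelsP => i h1 h2; exact: ISW h1 h2.
- move=> hx; have [i hi] := pres x ltac:(lia) ltac:(apply/eqP; lia).
  apply/in_labelsP; exists i => //.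
  case: (dcase (dr p i)) => // hd.
    have := Wx _ _ hi hd; lia.
  have := Sx _ _ hi hd; lia.
Qed.



Lemma last_indep (x y : nat) s : s != [::] -> last x s = last y s.
Proof. by case: s. Qed.

Lemma last_flatten (B : seq (seq nat)) : all (fun b => size b > 0) B -> B != [::] ->
  last 0 (flatten B) = last 0 (map block_end B).
Proof.
elim: B => // b B IH /= /andP[hb hB] _.
case: B IH hB => [|b' B'] IH hB /=; first by rewrite cats0.
rewrite last_cat.
have hb' : 0 < size b' by case/andP: hB.
rewrite (@last_indep _ 0); last by case: b' hb' {IH hB}.
by have := IH hB isT.
Qed.

Lemma ends_in (B : seq (seq nat)) e : all (fun b => size b > 0) B ->
  e \in map block_end B -> e \in flatten B.
Proof.
move=> /allP hall /mapP[b hb ->]; apply/flattenP; exists b => //.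
move: (hall b hb); rewrite /block_end; case: b hb => // z b' _ _ /=; exact: mem_last.
Qed.

Lemma sorted_gt_head (s : seq nat) e : sorted (fun x y => y < x) s -> e \in s -> e <= head 0 s.
Proof.
case: s => // h s /= hp; rewrite inE => /orP[/eqP -> //|he].
have := order_path_min _ hp; rewrite /= => /(_ _) /allP hall.
have : e < h by apply: hall => //; move=> a b c /= h1 h2; lia.
lia.
Qed.

Lemma sorted_gt_last (s : seq nat) e : sorted (fun x y => y < x) s -> e \in s -> last 0 s <= e.
Proof.
elim: s e => // h s IH e /= hp; rewrite inE => /orP[/eqP ->|he].
  case: s hp IH => //= h' s' /andP[hh hp] IH.
  have := IH h' hp (mem_head _ _); lia.
case: s hp IH he => //= h' s' /andP[hh hp] IH he.
exact: IH.
Qed.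

Lemma drop_index_ge (w : seq nat) k y : uniq w -> y \in drop k w -> k <= index y w.
Proof.
move=> hu hy.
have hk : k <= size w by rewrite leqNgt; apply/negP => h; rewrite drop_oversize in hy => //; exact: ltnW.
move: hu; rewrite -{1}(cat_take_drop k w) cat_uniq => /and3P[_ hdis _].
rewrite -[in index y w](cat_take_drop k w) index_cat; case: ifP => hin.
  by exfalso; move/hasP: hdis; apply; exists y.
by rewrite size_take_min; apply: leq_trans (leq_addr _ _); rewrite leq_min leqnn hk.
Qed.

Lemma index_gt_drop (w : seq nat) k y : y \in w -> k <= index y w -> y \in drop k w.
Proof.
move=> hy hk; have hi : index y w < size w by rewrite index_mem.
have -> : y = nth 0 (drop k w) (index y w - k).
  by rewrite nth_drop subnKC ?nth_index.
apply: mem_nth; rewrite size_drop; exact: (ltn_sub2r (leq_ltn_trans hk hi) hi).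
Qed.

Lemma rcons_trunc (s : seq nat) : s != [::] -> s = rcons (take (size s).-1 s) (last 0 s).
Proof. case/lastP: s => // s y _; rewrite last_rcons size_rcons /= -cats1 take_size_cat //. by rewrite cats1. Qed.

Lemma init_inv n r B : assemblee n.+1 r.+1 B ->
  Inv n.+1 (b_last B) (b_first B) (fe_init B).
Proof.
case=> hsz hall hperm hsort.
set N := n.+1; set bl := b_last B; set b1 := b_first B.
set w := asm_word B; set t := asm_word_trunc B.
have huw : uniq w by rewrite /w /asm_word (perm_uniq hperm) iota_uniq.
have hmw x : (x \in w) = (0 < x <= N).
  rewrite /w /asm_word (perm_mem hperm) mem_iota; apply/idP/idP; lia.
have hB0 : B != [::] by rewrite -size_eq0 hsz.
have hlast : last 0 w = bl by exact: last_flatten.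
have hw0 : w != [::] by rewrite -size_eq0 (perm_size hperm) size_iota.
have hw : w = rcons t bl by rewrite -hlast; exact: rcons_trunc.
have hwc : w = t ++ [:: bl] by rewrite hw cats1.
have /andP[hblt hut] : (bl \notin t) && uniq t by rewrite -rcons_uniq -hw.
have hmt x : (x \in t) = (0 < x <= N) && (x != bl).
  have := hmw x; rewrite hw mem_rcons inE.
  case: eqP => [->|_] /=; first by rewrite (negbTE hblt) andbF.
  by move=> ->; rewrite andbT.
have hidx x : x \in t -> index x w = index x t by move=> hx; rewrite hwc index_cat hx.
have hidbl : index bl w = size t by rewrite hwc index_cat (negbTE hblt) /= eqxx addn0.
have at_init i x : at_ (fe_init B) i x = (i < size t) && (nth 0 t i == x).
  rewrite /at_ /fe_init size_map -/t; case: ltnP => hi //=.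
  by rewrite (nth_map 0) //= eqn_leq.
have dr_init i : i < size t -> dr (fe_init B) i = dir_of_letter (letter_of B (nth 0 t i)).
  by move=> hi; rewrite /dr /fe_init (nth_map 0).
have hends : asm_ends B != [::] by rewrite /asm_ends -size_eq0 size_map hsz.
have hb1e : b1 \in asm_ends B by rewrite /b1 /b_first; case: (asm_ends B) hends => //= *; exact: mem_head.
have hble : bl \in asm_ends B.
  by rewrite /bl /b_last; case: (asm_ends B) hends => //= *; exact: mem_last.
have hrange e : e \in asm_ends B -> bl <= e <= b1.
  by move=> he; rewrite (sorted_gt_last hsort he) (sorted_gt_head hsort he).
have hew e : e \in asm_ends B -> e \in w by apply: ends_in.
split.
- move=> i; rewrite /fe_init; case: (ltnP i (size t)) => hi.
    by rewrite (nth_map 0) //=.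
  by rewrite nth_default // size_map.
- move=> x; split.
    case=> i; rewrite at_init => /andP[hi /eqP <-].
    by have := mem_nth 0 hi; rewrite hmt => /andP[-> ->].
  move=> [h1 h2]; have : x \in t by rewrite hmt h1 h2.
  move=> /(nthP 0)[i hi hx]; exists i; by rewrite at_init hi hx eqxx.
- move=> x i j; rewrite !at_init => /andP[hi /eqP hx] /andP[hj /eqP hx'].
  by apply/eqP; rewrite -(nth_uniq 0 hi hj hut) hx hx'.
- move=> x i; rewrite at_init => /andP[hi /eqP hx]; rewrite dr_init // hx => hd hxN.
  have hxt : x \in t by rewrite -hx mem_nth.
  have hxi : index x t = i by rewrite -hx index_uniq.
  move: hd; rewrite /letter_of /is_increase; case: ifP => // hxe; case: ifP => // hinc _.
  move: hinc; rewrite hxe /= => /negbT hinc.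
  have hx1w : x.+1 \in w by rewrite hmw; apply/andP; split => //.
  have hle : index x.+1 w <= index x w.
    rewrite leqNgt; apply/negP => hlt; apply: (negP hinc); exact: (index_gt_drop hx1w hlt).
  have hx1t : x.+1 \in t.
    rewrite hw mem_rcons inE in hx1w; case/orP: hx1w => // /eqP hb.
    move: hle; rewrite hb hidbl hidx // hxi; rewrite leqNgt hi.
    by [].
  exists (index x.+1 t); last by rewrite at_init index_mem hx1t nth_index ?eqxx.
  by rewrite -hidx // -hxi -hidx.
- move=> x i; rewrite at_init => /andP[hi /eqP hx]; rewrite dr_init // hx => hd.
  have hxt : x \in t by rewrite -hx mem_nth.
  have hxi : index x t = i by rewrite -hx index_uniq.
  move: hd; rewrite /letter_of /is_increase; case: ifP => // hxe; case: ifP => // hinc _.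
  move: hinc; rewrite hxe /= => hinc.
  have hx1w : x.+1 \in w := mem_drop hinc.
  have hge := drop_index_ge huw hinc.
  split; first by move: hx1w; rewrite hmw => /andP[_].
  have [hb|hb] := eqVneq x.+1 bl; [by left | right].
  have hx1t : x.+1 \in t by rewrite hmt hb andbT -hmw.
  exists (index x.+1 t); last by rewrite at_init index_mem hx1t nth_index ?eqxx.
  by rewrite -hidx // -hxi -hidx //; apply: ltnW.
- move=> x i; rewrite at_init => /andP[hi /eqP hx]; rewrite dr_init // hx => hd.
  have hxt : x \in t by rewrite -hx mem_nth.
  move: hd; rewrite /letter_of; case: ifP => // hxe; last by case: ifP.
  move=> _; have := hrange _ hxe; move: hxt; rewrite hmt => /andP[_ hne].
  rewrite ltn_neqAle eq_sym hne /=; by [].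
- move=> hne; have hb1t : b1 \in t by rewrite hmt -hmw hew // hne.
  exists (index b1 t); first by rewrite at_init index_mem hb1t nth_index ?eqxx.
  by rewrite dr_init ?index_mem // nth_index // /letter_of hb1e.
Qed.


Theorem lemma3p4 (n r : nat) (B : seq (seq nat)) (fin : fe_state) :
  r <= n ->
  assemblee n.+1 r.+1 B ->
  fe_run (fe_init B) fin ->
  fe_terminal fin ->
  [/\ forall x, in_labels DirW fin x = (b_first B < x <= n.+1),
      forall x, in_labels DirS fin x = (1 <= x < b_last B)
    & forall x, in_labels DirSW fin x = (b_last B < x <= b_first B)].
Proof.
move=> _ hA hrun hterm.
have hI := run_inv hrun (init_inv hA).
case: hA => hsz hall hperm hsort.
have hends : asm_ends B != [::] by rewrite /asm_ends -size_eq0 size_map hsz.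
have hb1e : b_first B \in asm_ends B.
  by rewrite /b_first; case: (asm_ends B) hends => //= *; exact: mem_head.
have hble : b_last B \in asm_ends B.
  by rewrite /b_last; case: (asm_ends B) hends => //= *; exact: mem_last.
apply: final hI hterm _ _.
  exact: (sorted_gt_head hsort hble).
have := ends_in hall hb1e; rewrite (perm_mem hperm) mem_iota => /andP[_].
by rewrite add1n ltnS.
Qed.
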